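(* Let $G$ be a finite simple connected graph other than $K_2$ and let $U$ be a set of leaves of $G$. Then there exists a set $V$ of leaves of $\rho\circ\lambda(G)$ such that \[ \rho\circ\lambda\circ\rho\circ\lambda_U(G)=\rho\circ\lambda_V\circ\rho\circ\lambda(G). \]
   Context: A leaf is a vertex of degree one; two distinct vertices are siblings if they have the same closed neighborhood $N[v]=\{v\}\cup N(v)$. For a graph $G$ other than $K_2$ and a set $S$ of leaves of $G$, $\lambda_S(G)$ is the graph obtained by removing the vertices in $S$; $\lambda(G)$ denotes the graph obtained by removing all leaves of $G$. $\rho(G)$ is the graph obtained from $G$ by contracting each maximal group of siblings to a single vertex (adjacent to the common outside neighbors of the group). Equalities of graphs are understood up to the natural identification of vertices (i.e. as isomorphic graphs). *)

(* Defs.v *)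
(* A finite simple graph is a symmetric irreflexive relation
   e on a finType T; all graphs arising from it (by deleting vertices and
   contracting sibling classes) are represented as induced subgraphs of (T,e)
   on a vertex set V : {set T}. *)
From mathcomp Require Import all_boot.
Set Implicit Arguments. Unset Strict Implicit. Unset Printing Implicit Defensive.

Section Graphs.
Variables (T : finType) (e : rel T).

Definition nbhd (V : {set T}) (x : T) : {set T} := [set y in V | e x y].
Definition cnbhd (V : {set T}) (x : T) : {set T} := x |: nbhd V x.

Definition leaves (V : {set T}) : {set T} := [set x in V | #|nbhd V x| == 1].

Definition lamS (S V : {set T}) : {set T} := V :\: S.
Definition lam (V : {set T}) : {set T} := V :\: leaves V.

Definition siblings (V : {set T}) (x y : T) : bool :=
  [&& x \in V, y \in V, x != y & cnbhd V x == cnbhd V y].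

(* rho : contract every maximal group of siblings to a single vertex.
   The contracted vertex is represented by the member of the group with the
   least enum_rank; since siblings have identical closed neighbourhoods, its
   induced adjacency is exactly the common outside neighbourhood of the group. *)
Definition rho (V : {set T}) : {set T} :=
  [set x in V | [forall y, siblings V x y ==> (enum_rank x < enum_rank y)%N]].

Definition isK2 (V : {set T}) : Prop :=
  #|V| = 2 /\ {in V &, forall x y, x != y -> e x y}.

Definition iso (V1 V2 : {set T}) : Prop :=
  exists f : T -> T, [/\ bijective f, f @: V1 = V2 &
    {in V1 &, forall x y, e (f x) (f y) = e x y}].

End Graphs.

(* Main.v *)
Require Import Defs.
From mathcomp Require Import all_boot.
Set Implicit Arguments. Unset Strict Implicit. Unset Printing Implicit Defensive.

Section Aux.
Variables (T : finType) (e : rel T).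
Hypothesis esy : symmetric e.
Hypothesis eirr : irreflexive e.

Definition tw (V : {set T}) x y :=
  [&& x \in V, y \in V & cnbhd e V x == cnbhd e V y].

Lemma in_cnbhd (V : {set T}) (x y : T) : (y \in cnbhd e V x) = (y == x) || (y \in V) && e x y.
Proof. by rewrite /cnbhd /nbhd !inE. Qed.

Lemma cn_sym (V : {set T}) (x y : T) : x \in V -> y \in V ->
  (y \in cnbhd e V x) = (x \in cnbhd e V y).
Proof. by rewrite !in_cnbhd => -> ->; rewrite eq_sym esy. Qed.

Lemma twP (V : {set T}) (x y : T) : tw V x y -> [/\ x \in V, y \in V & cnbhd e V x = cnbhd e V y].
Proof. by case/and3P => -> -> /eqP. Qed.

Lemma tw_refl (V : {set T}) (x : T) : x \in V -> tw V x x.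
Proof. by move=> xV; rewrite /tw xV eqxx. Qed.

Lemma tw_sym (V : {set T}) (x y : T) : tw V x y -> tw V y x.
Proof. by case/twP => xV yV c; rewrite /tw xV yV c eqxx. Qed.

Lemma tw_trans (V : {set T}) (x y z : T) : tw V x y -> tw V y z -> tw V x z.
Proof.
by case/twP => xV _ c1; case/twP => _ zV c2; rewrite /tw xV zV c1 c2 eqxx.
Qed.

Lemma tw_adj (V : {set T}) (x y : T) : tw V x y -> x != y -> e x y.
Proof.
case/twP => xV yV c nxy.
have : y \in cnbhd e V y by rewrite in_cnbhd eqxx.
rewrite -c in_cnbhd; case/orP => [/eqP E|/andP[_ //]].
by subst y; rewrite eqxx in nxy.
Qed.

Lemma class_adj (V : {set T}) (x x' y y' : T) : tw V x x' -> tw V y y' -> ~~ tw V x y ->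
  e x y -> e x' y'.
Proof.
move=> hx hy nxy exy.
have [xV x'V cx] := twP hx; have [yV y'V cy] := twP hy.
have h1 : e x' y.
  have : y \in cnbhd e V x' by rewrite -cx in_cnbhd yV exy orbT.
  rewrite in_cnbhd yV /=; case/orP => // /eqP yx'.
  by subst y; rewrite hx in nxy.
have : x' \in cnbhd e V y' by rewrite -cy in_cnbhd x'V esy h1 orbT.
rewrite in_cnbhd x'V /=; case/orP => [/eqP xy'|]; last by rewrite esy.
by subst x'; rewrite (tw_trans hx (tw_sym hy)) in nxy.
Qed.

Lemma rho_sub (V : {set T}) : rho e V \subset V.
Proof. by apply/subsetP => x; rewrite inE => /andP[]. Qed.

Lemma rho_uniq (V : {set T}) (x y : T) : x \in rho e V -> y \in rho e V -> tw V x y -> x = y.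
Proof.
rewrite !inE => /andP[xV /forallP hx] /andP[yV /forallP hy] /twP[_ _ c].
apply/eqP/negPn/negP => nxy.
have := hx y; have := hy x.
rewrite /siblings xV yV nxy eq_sym nxy c eqxx /= => /ltn_trans h /h.
by rewrite ltnn.
Qed.

Lemma rho_rep (V : {set T}) (x : T) : x \in V -> exists2 r, r \in rho e V & tw V r x.
Proof.
move=> xV.
case: (arg_minnP (fun r => enum_rank r) (tw_refl xV)) => r hr hmin.
have rV : r \in V by case/twP: hr.
exists r; last exact: tw_sym.
rewrite inE rV; apply/forallP => y.
apply/implyP => /and4P[_ yV nry cry].
have twy : tw V x y by apply: tw_trans hr _; rewrite /tw yV rV.
rewrite ltn_neqAle hmin // andbT.
by apply: contra nry => /eqP/val_inj/enum_rank_inj ->.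
Qed.

Lemma cnI (A B : {set T}) (c w : T) : A \subset B -> c \in A ->
  (w \in cnbhd e A c) = (w \in A) && (w \in cnbhd e B c).
Proof.
move=> sAB cA; rewrite !in_cnbhd.
case: eqP => [->|_] /=; first by rewrite cA.
case wA : (w \in A) => //=; by rewrite (subsetP sAB _ wA).
Qed.

Lemma tw_restrict (A B : {set T}) (x y : T) : A \subset B -> x \in A -> y \in A ->
  tw B x y -> tw A x y.
Proof.
move=> sAB xA yA /twP[_ _ c]; rewrite /tw xA yA; apply/eqP/setP => w.
by rewrite !(cnI _ sAB) // c.
Qed.

Definition sq (A B : {set T}) := A \subset B /\
  (forall b, b \in B -> exists2 a, a \in A & tw B a b).

Lemma sq_tw (A B : {set T}) (a a' : T) : sq A B -> a \in A -> a' \in A -> tw A a a' -> tw B a a'.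
Proof.
move=> [sAB hB] aA a'A /twP[_ _ hA].
have aB := subsetP sAB _ aA; have a'B := subsetP sAB _ a'A.
rewrite /tw aB a'B; apply/eqP/setP => z.
case zB : (z \in B); last first.
  rewrite !in_cnbhd zB /= !orbF.
  by apply/idP/idP => /eqP ?; subst z; rewrite ?aB ?a'B in zB.
have [a0 a0A ha0] := hB z zB.
have a0B := subsetP sAB _ a0A.
have key c : c \in A -> (z \in cnbhd e B c) = (a0 \in cnbhd e A c).
  move=> cA; have cB := subsetP sAB _ cA.
  have [_ _ c0] := twP ha0.
  by rewrite cn_sym // -c0 -cn_sym // (cnI _ sAB) // a0A.
by rewrite !key // hA.
Qed.

Lemma sq_rho (V : {set T}) : sq (rho e V) V.
Proof. by split; [apply: rho_sub | move=> b /rho_rep]. Qed.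

Lemma ext_bij (A : {set T}) (g : T -> T) : {in A &, injective g} ->
  exists f : T -> T, bijective f /\ {in A, f =1 g}.
Proof.
move=> ginj.
pose sA := enum (~: A); pose sB := enum (~: (g @: A)).
have ssz : size sA = size sB.
  rewrite /sA /sB -!cardE.
  have h1 := cardsC A; have h2 := cardsC (g @: A).
  rewrite card_in_imset // in h2.
  by apply/eqP; rewrite -(eqn_add2l #|A|) h1 h2.
pose f x := if x \in A then g x else nth x sB (index x sA).
have fout y : y \notin A -> f y \in ~: (g @: A).
  move=> yA; rewrite /f (negbTE yA) -[_ \in ~: _]mem_enum -/sB.
  by apply: mem_nth; rewrite -ssz index_mem /sA mem_enum inE.
exists f; split; last by move=> x xA; rewrite /f xA.
apply: injF_bij => x y.
case xA : (x \in A); case yA : (y \in A).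
- by rewrite /f xA yA => /ginj; apply.
- move=> E; have := fout y (negbT yA); rewrite -E /f xA inE.
  by rewrite imset_f.
- move=> E; have := fout x (negbT xA); rewrite E /f yA inE.
  by rewrite imset_f.
- rewrite /f xA yA.
  have xs : x \in sA by rewrite mem_enum inE xA.
  have ys : y \in sA by rewrite mem_enum inE yA.
  have ix : index x sA < size sB by rewrite -ssz index_mem.
  have iy : index y sA < size sB by rewrite -ssz index_mem.
  rewrite (set_nth_default x _ iy) => /eqP.
  rewrite nth_uniq ?enum_uniq // => /eqP E.
  by rewrite -(nth_index x xs) E nth_index.
Qed.

Lemma iso_sym (A B : {set T}) : iso e A B -> iso e B A.
Proof.
case=> f [[g fK gK] img hE].
exists g; split; first by exists f.
  by rewrite -img -imset_comp -[RHS]imset_id; apply: eq_imset => x /=; rewrite fK.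
move=> x y; rewrite -img => /imsetP[x' x'A ->] /imsetP[y' y'A ->].
by rewrite !fK hE.
Qed.

Lemma iso_trans (A B C : {set T}) : iso e A B -> iso e B C -> iso e A C.
Proof.
case=> f [fb img hE]; case=> f' [f'b img' hE'].
exists (f' \o f); split; first exact: bij_comp.
  by rewrite imset_comp img img'.
move=> x y xA yA /=; rewrite hE' ?hE // -img imset_f //.
Qed.

Lemma iso_sq (A B : {set T}) : sq A B -> iso e (rho e A) (rho e B).
Proof.
move=> hsq; have [sAB hB] := hsq.
have gex a : a \in B -> exists r, (r \in rho e B) && tw B r a.
  by move=> /rho_rep [r r1 r2]; exists r; rewrite r1.
pose g a := if [pick r | (r \in rho e B) && tw B r a] is Some r then r else a.
have gs a : a \in B -> g a \in rho e B /\ tw B (g a) a.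
  move=> aB; rewrite /g; case: pickP => [r /andP[]|] //.
  by have [r hr] := gex a aB => /(_ r); rewrite hr.
have rA a : a \in rho e A -> a \in A by move/(subsetP (rho_sub A)).
have rB a : a \in rho e A -> a \in B by move/rA/(subsetP sAB).
have ginj : {in rho e A &, injective g}.
  move=> a a' ha ha' E.
  have [_ t1] := gs a (rB _ ha); have [_ t2] := gs a' (rB _ ha').
  apply: (rho_uniq ha ha'); apply: tw_restrict sAB (rA _ ha) (rA _ ha') _.
  by apply: tw_trans (tw_sym t1) _; rewrite E.
have [f [fb fg]] := ext_bij ginj.
exists f; split => //.
  rewrite (eq_in_imset fg); apply/setP => b; apply/imsetP/idP.
    by case=> a ha ->; case: (gs a (rB _ ha)).
  move=> hb; have bB := subsetP (rho_sub B) _ hb.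
  have [a0 a0A t0] := hB b bB.
  have [a ha ta] := rho_rep a0A.
  exists a => //.
  have [g1 g2] := gs a (rB _ ha).
  symmetry; apply: rho_uniq g1 hb _.
  apply: tw_trans g2 (tw_trans (sq_tw hsq (rA _ ha) a0A ta) t0).
move=> x y hx hy; rewrite !fg //.
have [gx1 gx2] := gs x (rB _ hx); have [gy1 gy2] := gs y (rB _ hy).
case txy : (tw B x y).
  have E : x = y.
    by apply: (rho_uniq hx hy); apply: tw_restrict sAB (rA _ hx) (rA _ hy) txy.
  by subst y; rewrite !eirr.
apply/idP/idP.
  apply: (class_adj gx2 gy2).
  apply: contraFN txy => h.
  by apply: tw_trans (tw_sym gx2) (tw_trans h gy2).
by apply: class_adj (tw_sym gx2) (tw_sym gy2) (negbT txy).
Qed.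

Hypothesis conn : forall x y, connect e x y.
Hypothesis nK2 : ~ isK2 e [set: T].

Definition Dof (W : {set T}) :=
  [set x in W | [exists r in leaves e (rho e W), tw W r x]].
Definition H := lam e [set: T].

Lemma inH x : (x \in H) = (x \notin leaves e [set: T]).
Proof. by rewrite /H /lam in_setD in_setT andbT. Qed.

Lemma conn_closed (P : pred T) x : (forall u v, P u -> e u v -> P v) ->
  P x -> forall v, connect e x v -> P v.
Proof.
move=> cl Px v /connectP[p pth ->].
elim: p x Px pth => //= y p IH x Px /andP[exy pth].
exact: IH (cl _ _ Px exy) pth.
Qed.

Lemma leaf_nb (l : T) : l \in leaves e [set: T] -> exists s, nbhd e [set: T] l = [set s].
Proof. by rewrite inE => /andP[_ /cards1P]. Qed.

Lemma nbT (V : {set T}) (l s : T) : nbhd e V l = [set s] ->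
  forall v, (v \in V) && e l v = (v == s).
Proof. by move=> /setP h v; have := h v; rewrite /nbhd !inE. Qed.

Lemma nbT' (l s : T) : nbhd e [set: T] l = [set s] -> forall v, e l v = (v == s).
Proof. by move=> h v; have := nbT h v; rewrite in_setT. Qed.

Lemma leaves_sub (V : {set T}) : leaves e V \subset V.
Proof. by apply/subsetP => x; rewrite inE => /andP[]. Qed.

Lemma leaf_nonleaf (l s : T) : l \in leaves e [set: T] -> nbhd e [set: T] l = [set s] ->
  s \notin leaves e [set: T].
Proof.
move=> hl hs; apply/negP => sl.
case: (leaf_nb sl) => t ht.
have els : e l s by rewrite (nbT' hs) eqxx.
have tl : l == t by rewrite -(nbT' ht) esy.
apply: nK2.
have all v : (v == l) || (v == s).
  apply: (conn_closed (P := fun v => (v == l) || (v == s))) (conn l v); last by rewrite eqxx.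
  move=> u w /orP[/eqP->|/eqP->] euw.
    by rewrite (nbT' hs) in euw; rewrite euw orbT.
  by rewrite (nbT' ht) -(eqP tl) in euw; rewrite euw.
split.
  have -> : [set: T] = [set l; s] by apply/setP => v; rewrite !inE all.
  have ls : l != s by apply/eqP => E; subst s; rewrite eirr in els.
  by rewrite cards2 ls.
move=> x y _ _ nxy.
case/orP: (all x) => /eqP ?; case/orP: (all y) => /eqP ?; subst x y;
  rewrite ?eqxx in nxy => //; by rewrite esy.
Qed.

Lemma Dclosed (W : {set T}) (x y : T) : x \in Dof W -> tw W x y -> y \in Dof W.
Proof.
rewrite !inE => /andP[_ /existsP[r /andP[rl trx]]] t.
have [_ yW _] := twP t.
by rewrite yW; apply/existsP; exists r; rewrite rl (tw_trans trx t).
Qed.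

Lemma D_rho_leaf (W : {set T}) (x : T) : x \in rho e W -> x \in Dof W -> x \in leaves e (rho e W).
Proof.
move=> xr; rewrite inE => /andP[_ /existsP[r /andP[rl trx]]].
have rr := subsetP (leaves_sub _) _ rl.
by have E := rho_uniq rr xr trx; subst r.
Qed.

Lemma lam_rho (W : {set T}) : lam e (rho e W) = rho e W :\: Dof W.
Proof.
apply/setP => x; rewrite /lam !in_setD.
case xr : (x \in rho e W); rewrite ?andbF ?andbT //; congr negb.
apply/idP/idP; last exact: D_rho_leaf.
move=> xl; rewrite inE (subsetP (rho_sub W) _ xr) /=.
apply/existsP; exists x; rewrite xl tw_refl //.
exact: (subsetP (rho_sub W) _ xr).
Qed.

Lemma lam_rho_nonempty (W : {set T}) (x : T) : x \in W ->
  exists2 y, y \in rho e W & y \notin leaves e (rho e W).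
Proof.
move=> xW; have [r rr _] := rho_rep xW.
case rl : (r \in leaves e (rho e W)); last by exists r; rewrite ?rl.
move: (rl); rewrite inE rr /= => /cards1P[a ha].
have nba := nbT ha.
have /andP[ar era] : (a \in rho e W) && e r a by rewrite nba.
case al : (a \in leaves e (rho e W)); last by exists a; rewrite ?al.
move: (al); rewrite inE ar /= => /cards1P[b hb].
have nbb := nbT hb.
have rb : r == b by rewrite -nbb rr esy.
move/eqP: rb => rb; subst b.
have tw' : tw (rho e W) r a.
  rewrite /tw rr ar; apply/eqP/setP => v; rewrite !in_cnbhd nba nbb orbC //.
have tW := sq_tw (sq_rho W) rr ar tw'.
have E := rho_uniq rr ar tW; subst a.
by rewrite eirr in era.
Qed.

Lemma bprime (W : {set T}) (l : T) : (forall x, x \notin leaves e [set: T] -> x \in W) ->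
  l \in W -> l \in leaves e [set: T] -> l \notin Dof W ->
  exists2 s, s \in W :\: Dof W & (s \notin leaves e [set: T]) && tw W l s.
Proof.
move=> hW lW hl lD.
case: (leaf_nb hl) => s hs.
have sn := leaf_nonleaf hl hs.
have sW := hW s sn.
have els : e l s by rewrite (nbT' hs) eqxx.
case tls : (tw W l s).
  exists s; last by rewrite sn.
  rewrite in_setD sW andbT; apply: contra lD => sD.
  exact: Dclosed sD (tw_sym tls).
exfalso; move/negP: lD; apply.
have lr : l \in rho e W.
  rewrite inE lW; apply/forallP => y; apply/implyP => /and4P[_ yW nly /eqP c].
  have : y \in cnbhd e W l by rewrite c in_cnbhd eqxx.
  rewrite in_cnbhd eq_sym (negbTE nly) yW /= (nbT' hs) => /eqP E; subst y.
  by rewrite /tw lW sW c eqxx in tls.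
have sr : s \in rho e W.
  rewrite inE sW; apply/forallP => y; apply/implyP => /and4P[_ yW nsy /eqP c].
  have : l \in cnbhd e W y by rewrite -c in_cnbhd lW esy els orbT.
  rewrite in_cnbhd lW /= => /orP[/eqP E|].
    by subst y; rewrite /tw lW sW c eqxx in tls.
  by rewrite esy (nbT' hs) eq_sym (negbTE nsy).
rewrite inE lW /=; apply/existsP; exists l; rewrite tw_refl // andbT.
rewrite inE lr /=; apply/cards1P; exists s; apply/setP => v.
rewrite in_set1 /nbhd in_set (nbT' hs).
by case: eqP => [->|]; rewrite ?sr ?andbF.
Qed.

Lemma key (W : {set T}) (x : T) : (forall x, x \notin leaves e [set: T] -> x \in W) ->
  x \in H -> x \in Dof W -> (forall y, tw H x y -> y \in Dof W) ->
  exists2 r, r \in leaves e (rho e H) & tw H r x.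
Proof.
move=> hW xH xD hall.
have HW : H \subset W by apply/subsetP => y; rewrite inH; apply: hW.
have xW := subsetP HW _ xH.
move: (xD); rewrite inE => /andP[_ /existsP[r /andP[rl trx]]].
have rr := subsetP (leaves_sub _) _ rl.
have rW := subsetP (rho_sub W) _ rr.
move: rl; rewrite inE => /andP[_ /cards1P[r' hr']].
have nbr := nbT hr'.
case: (boolP [exists z, [&& z \in H, e x z & ~~ tw H x z]]).
  case/existsP => z /and3P[zH exz ntz].
  have [pH pHr tpH] := rho_rep xH.
  have [q qr tq] := rho_rep zH.
  have Z y : y \in H -> e x y -> ~~ tw H x y -> tw W r' y.
    move=> yH exy nty; have yW := subsetP HW _ yH.
    have ntW : ~~ tw W x y.
      by apply: contra nty; apply: tw_restrict HW xH yH.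
    have ntr : ~~ tw W r y.
      by apply: contra ntW => h; apply: tw_trans (tw_sym trx) h.
    have ery : e r y := class_adj (tw_sym trx) (tw_refl yW) ntW exy.
    have [ry ryr try] := rho_rep yW.
    have erry : e r ry := class_adj (tw_refl rW) (tw_sym try) ntr ery.
    by have := nbr ry; rewrite ryr erry => /esym/eqP <-.
  exists pH => //.
  rewrite inE pHr /=; apply/cards1P; exists q; apply/setP => y.
  rewrite in_set1 /nbhd in_set; apply/idP/idP.
    case/andP => yr epy; have yH := subsetP (rho_sub H) _ yr.
    have ntp : ~~ tw H pH y.
      apply/negP => t; have E := rho_uniq pHr yr t; subst y.
      by rewrite eirr in epy.
    have ntx : ~~ tw H x y by apply: contra ntp; apply: tw_trans tpH.
    have exy : e x y := class_adj tpH (tw_refl yH) ntp epy.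
    have t1 := Z y yH exy ntx; have t2 := Z z zH exz ntz.
    have tyz : tw H y z.
      by apply: tw_restrict HW yH zH _; apply: tw_trans (tw_sym t1) t2.
    by apply/eqP; apply: (rho_uniq yr qr); apply: tw_trans tyz (tw_sym tq).
  move/eqP => ->; rewrite qr /=.
  exact: class_adj (tw_sym tpH) (tw_sym tq) ntz exz.
move=> /existsPn hnz; exfalso.
have hB z : z \in H -> e x z -> tw H x z.
  by move=> zH exz; have := hnz z; rewrite zH exz /= negbK.
have helper k v : tw H x k -> v \in H -> e k v -> tw H x v.
  move=> tk vH ekv; have [_ kH ck] := twP tk.
  have : v \in cnbhd e H k by rewrite in_cnbhd vH ekv orbT.
  rewrite -ck in_cnbhd vH /= => /orP[/eqP->|]; first exact: tw_refl.
  exact: hB.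
have allH v : v \in H -> tw H x v.
  move=> vH; pose P := fun v => tw H x v || [exists k, tw H x k && e k v].
  have : P v.
    apply: (conn_closed (P := P)) (conn x v); last by rewrite /P tw_refl.
    move=> u w /orP[tu|/existsP[k /andP[tk eku]]] euw.
      by apply/orP; right; apply/existsP; exists u; rewrite tu.
    case uH : (u \in H).
      by apply/orP; right; apply/existsP; exists u; rewrite (helper k u tk uH eku).
    move: uH; rewrite inH => /negbFE ul.
    case: (leaf_nb ul) => t ht.
    have kt : k == t by rewrite -(nbT' ht) esy.
    have wt : w == t by rewrite -(nbT' ht).
    by apply/orP; left; rewrite (eqP wt) -(eqP kt).
  case/orP => // /existsP[k /andP[tk ekv]]; exact: helper k v tk vH ekv.
have HD : H \subset Dof W by apply/subsetP => y yH; apply: hall (allH y yH).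
have WD w : w \in W -> w \in Dof W.
  move=> wW; case wH : (w \in H); first exact: (subsetP HD).
  move: wH; rewrite inH => /negbFE wl.
  apply/negPn/negP => wD.
  have [s sWD /andP[sn _]] := bprime hW wW wl wD.
  have sH : s \in H by rewrite inH.
  by move: sWD; rewrite in_setD (subsetP HD _ sH).
have [y yr yl] := lam_rho_nonempty xW.
have := D_rho_leaf yr (WD y (subsetP (rho_sub W) _ yr)).
by rewrite (negbTE yl).
Qed.


Lemma main_thm (U : {set T}) : U \subset leaves e [set: T] ->
  exists V : {set T},
    V \subset leaves e (rho e (lam e [set: T])) /\
    iso e (rho e (lam e (rho e (lamS U [set: T]))))
          (rho e (lamS V (rho e (lam e [set: T])))).
Proof.
move=> hU.
set W := lamS U [set: T].
have hW x : x \notin leaves e [set: T] -> x \in W.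
  rewrite /W /lamS in_setD in_setT andbT; apply: contra => xU.
  exact: (subsetP hU).
have HW : H \subset W by apply/subsetP => y; rewrite inH; apply: hW.
rewrite -/H.
set D := Dof W.
set D2 := [set x in H | [forall y, tw H x y ==> (y \in D)] &&
                         [exists r in leaves e (rho e H), tw H r x]].
have D2D x : x \in D2 -> x \in D.
  rewrite /D2 in_set => /andP[xH /andP[/forallP h _]].
  by have := h x; rewrite tw_refl.
have D2cl x y : x \in D2 -> tw H x y -> y \in D2.
  move=> hx t; move: hx; rewrite /D2 in_set => /andP[_ /andP[/forallP h /existsP[r /andP[rl trx]]]].
  have [_ yH _] := twP t; rewrite in_set yH /=; apply/andP; split.
    apply/forallP => z; apply/implyP => tz.
    exact: (implyP (h z)) (tw_trans t tz).
  by apply/existsP; exists r; rewrite rl (tw_trans trx t).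
exists (rho e H :&: D2); split.
  apply/subsetP => x; rewrite in_setI => /andP[xr].
  rewrite /D2 in_set => /andP[_ /andP[_ /existsP[r /andP[rl trx]]]].
  have rr := subsetP (leaves_sub _) _ rl.
  by have E := rho_uniq rr xr trx; subst r.
rewrite lam_rho -/D.
have S2 : sq (rho e W :\: D) (W :\: D).
  split.
    exact: setSD (rho_sub W).
  move=> b; rewrite in_setD => /andP[bD bW].
  have [r rr trb] := rho_rep bW.
  have rD : r \notin D by apply: contra bD => rD; apply: Dclosed rD trb.
  have rin : r \in rho e W :\: D by rewrite in_setD rD rr.
  exists r => //.
  apply: tw_restrict _ _ _ trb.
  - by apply/subsetP => y; rewrite in_setD => /andP[].
  - by rewrite in_setD rD (subsetP (rho_sub W)).
  - by rewrite in_setD bD.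
have S3 : sq (H :\: D) (W :\: D).
  split.
    exact: setSD HW.
  move=> b; rewrite in_setD => /andP[bD bW].
  case bH : (b \in H).
    by exists b; [rewrite in_setD bD | apply: tw_refl; rewrite in_setD bD].
  move: bH; rewrite inH => /negbFE bl.
  have [s sWD /andP[sn tbs]] := bprime hW bW bl bD.
  move: (sWD); rewrite in_setD => /andP[sD sW].
  exists s; first by rewrite in_setD sD inH.
  apply: tw_restrict _ sWD _ (tw_sym tbs).
  - by apply/subsetP => y; rewrite in_setD => /andP[].
  - by rewrite in_setD bD.
have S4 : sq (H :\: D) (H :\: D2).
  split.
    apply/subsetP => x; rewrite !in_setD => /andP[xD ->]; rewrite andbT.
    by apply: contra xD; apply: D2D.
  move=> b; rewrite in_setD => /andP[bD2 bH].
  have sub : H :\: D2 \subset H by apply/subsetP => y; rewrite in_setD => /andP[].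
  case bD : (b \in D); last first.
    by exists b; [rewrite in_setD bD | apply: tw_refl; rewrite in_setD bD2].
  case: (boolP [forall y, tw H b y ==> (y \in D)]) => [/forallP hall | /forallPn [y]].
    have [r rl tr] := key hW bH bD (fun y t => implyP (hall y) t).
    case/negP: bD2; rewrite /D2 in_set bH /=; apply/andP; split.
      by apply/forallP.
    by apply/existsP; exists r; rewrite rl.
  rewrite negb_imply => /andP[ty yD].
  have [_ yH _] := twP ty.
  have yD2 : y \notin D2 by apply: contra yD; apply: D2D.
  exists y; first by rewrite in_setD yD yH.
  apply: tw_restrict sub _ _ (tw_sym ty).
  - by rewrite in_setD yD2.
  - by rewrite in_setD bD2.
have S5 : sq (rho e H :\: (rho e H :&: D2)) (H :\: D2).
  split.
    apply/subsetP => x; rewrite in_setD => /andP[h xr].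
    rewrite in_setD (subsetP (rho_sub H) _ xr) andbT.
    by move: h; rewrite in_setI xr.
  move=> b; rewrite in_setD => /andP[bD2 bH].
  have [r rr trb] := rho_rep bH.
  have rD2 : r \notin D2 by apply: contra bD2 => h; apply: D2cl h trb.
  exists r; first by rewrite in_setD in_setI rr rD2.
  apply: tw_restrict _ _ _ trb.
  - by apply/subsetP => y; rewrite in_setD => /andP[].
  - by rewrite in_setD rD2 (subsetP (rho_sub H)).
  - by rewrite in_setD bD2.
apply: iso_trans (iso_sq S2) _.
apply: iso_trans (iso_sym (iso_sq S3)) _.
apply: iso_trans (iso_sq S4) _.
exact: iso_sym (iso_sq S5).
Qed.

End Aux.

Theorem theorem5p1 (T : finType) (e : rel T) :
  symmetric e -> irreflexive e -> (forall x y, connect e x y) ->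
  ~ isK2 e [set: T] ->
  forall U : {set T}, U \subset leaves e [set: T] ->
  exists V : {set T},
    V \subset leaves e (rho e (lam e [set: T])) /\
    iso e (rho e (lam e (rho e (lamS U [set: T]))))
          (rho e (lamS V (rho e (lam e [set: T])))).
Proof. move=> hs hi hc hk U hU; exact: main_thm hs hi hc hk U hU. Qed.
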